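(* Let $\mathcal{X}\subseteq\mathbb{R}^n$, $\mathcal{Z}=\mathcal{X}\times\mathcal{Y}$, $\rho$ a probability distribution on $\mathcal{Z}$, $d$ a metric on $\mathcal{X}$, $\mathcal{W}\subseteq\mathbb{R}^p$ compact, and $\ell:\mathcal{Z}\times\mathcal{W}\to\mathbb{R}^+$ differentiable in $x$ and convex with respect to the input, i.e. for all $x,x'\in\mathcal{X}$, $y\in\mathcal{Y}$, $w\in\mathcal{W}$, $$\ell((x',y),w)-\ell((x,y),w)\ge\langle\nabla_x\ell((x,y),w),x'-x\rangle.$$ Define $R^*_\epsilon=\inf_{w\in\mathcal{W}}\mathbb{E}_{(x,y)\sim\rho}\big[\sup_{x':d(x,x')\le\epsilon}\ell((x',y),w)\big]$. Then $$R^*_\epsilon\ge R^*_0+\inf_{w\in\mathcal{W}}\mathbb{E}_{z=(x,y)\sim\rho}\Big[\sup_{x':d(x,x')\le\epsilon}\langle\nabla_x\ell((x,y),w),x'-x\rangle\Big].$$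
   Context: $R^*_0=\inf_{w}\mathbb{E}_{z\sim\rho}\ell(z,w)$ is the optimal standard risk. *)

(* Defs.v *)
From HB Require Import structures.
From mathcomp Require Import all_boot all_order all_algebra.
From mathcomp Require Import all_classical all_reals all_analysis.
Set Implicit Arguments. Unset Strict Implicit. Unset Printing Implicit Defensive.
Import Order.TTheory GRing.Theory Num.Theory.
Import numFieldNormedType.Exports.
Local Open Scope classical_set_scope.
Local Open Scope ring_scope.

Definition borel_rV (R : realType) (n : nat) :=
  g_sigma_algebraType (@open 'rV[R]_n).

Definition dotv (R : realType) (n : nat) (u v : 'rV[R]_n) : R :=
  \sum_(i < n) u 0 i * v 0 i.

Definition grad (R : realType) (n : nat) (f : 'rV[R]_n -> R) (x : 'rV[R]_n)
  : 'rV[R]_n := \row_(i < n) ('d f x (delta_mx 0 i : 'rV[R]_n)).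

Definition is_metric_on (R : realType) (n : nat) (X : set 'rV[R]_n)
  (dist : 'rV[R]_n -> 'rV[R]_n -> R) : Prop :=
  (forall x x', X x -> X x' -> 0 <= dist x x') /\
  (forall x x', X x -> X x' -> (dist x x' = 0 <-> x = x')) /\
  (forall x x', X x -> X x' -> dist x x' = dist x' x) /\
  (forall x x' x'', X x -> X x' -> X x'' -> dist x x'' <= dist x x' + dist x' x'').

(* Main.v *)
Require Import Defs.
From HB Require Import structures.
From mathcomp Require Import all_boot all_order all_algebra.
From mathcomp Require Import all_classical all_reals all_analysis.
From mathcomp Require Import ring lra.
Import Order.TTheory GRing.Theory Num.Theory.
Import numFieldNormedType.Exports.
Local Open Scope classical_set_scope.
Local Open Scope ring_scope.
Import HBNNSimple.
Section helpers.
Local Open Scope ereal_scope.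
Lemma sup_add_le (R : realType) (A B : set \bar R) (c : \bar R) a0 b0 :
  A a0 -> B b0 -> (forall a, A a -> 0 <= a) -> (forall b, B b -> 0 <= b) ->
  (forall a b, A a -> B b -> a + b <= c) -> ereal_sup A + ereal_sup B <= c.
Proof.
move=> Aa0 Bb0 A0 B0 H.
have sA0 : 0 <= ereal_sup A by apply: le_trans (A0 _ Aa0) _; exact: ereal_sup_ubound.
have sB0 : 0 <= ereal_sup B by apply: le_trans (B0 _ Bb0) _; exact: ereal_sup_ubound.
case: c H => [r| |] H; last first.
- have := H _ _ Aa0 Bb0; rewrite leNgt => /negP; case.
  by apply: (@lt_le_trans _ _ 0); [exact: ltNy0|exact: adde_ge0 (A0 _ Aa0) (B0 _ Bb0)].
- exact: leey.
rewrite leNgt; apply/negP => Hlt.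
case: (ereal_sup A) sA0 Hlt (@ereal_sup_gt _ A) => [s| |] //; last first.
  move=> _ _ /(_ r%:E (ltry _)) [a Aa ra].
  have := H _ _ Aa Bb0; rewrite leNgt => /negP; apply.
  by apply: (lt_le_trans ra); rewrite leeDl // B0.
move=> s0.
case: (ereal_sup B) sB0 (@ereal_sup_gt _ B) => [t| |] //; last first.
  move=> _ /(_ r%:E (ltry _)) [b Bb rb] _ _.
  have := H _ _ Aa0 Bb; rewrite leNgt => /negP; apply.
  by apply: (lt_le_trans rb); rewrite leeDr // A0.
move=> t0 gtB; rewrite -EFinD lte_fin => rst gtA.
pose e := ((s + t - r) / 2)%R.
have e0 : (0 < e)%R by rewrite divr_gt0 // subr_gt0.
have h1 : (s - e)%:E < s%:E by rewrite lte_fin gtrBl.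
have h2 : (t - e)%:E < t%:E by rewrite lte_fin gtrBl.
have [a Aa ha] := gtA _ h1.
have [b Bb hb] := gtB _ h2.
have := H _ _ Aa Bb; rewrite leNgt => /negP; apply.
have : ((s - e)%:E + (t - e)%:E < a + b) by exact: lteD.
apply: le_lt_trans; rewrite -EFinD lee_fin /e.
by rewrite le_eqVlt; apply/orP; left; apply/eqP; field.
Qed.
Lemma int_mono d (T : measurableType d) (R : realType) (mu : {measure set T -> \bar R})
  (D : set T) (f g : T -> \bar R) :
  (forall x, D x -> 0 <= f x) -> (forall x, D x -> f x <= g x) ->
  \int[mu]_(x in D) f x <= \int[mu]_(x in D) g x.
Proof.
move=> f0 fg.
have g0 : forall x, D x -> 0 <= g x by move=> x Dx; exact: le_trans (f0 _ Dx) (fg _ Dx).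
rewrite (ge0_integralE _ f0) (ge0_integralE _ g0); apply: ereal_sup_le.
move=> _ [h hf <-]; exists h => // x; apply: le_trans (hf x) _.
by rewrite /patch; case: ifPn => // /set_mem /fg.
Qed.

Lemma int_superadd d (T : measurableType d) (R : realType) (mu : {measure set T -> \bar R})
  (D : set T) (f g : T -> \bar R) :
  (forall x, D x -> 0 <= f x) -> (forall x, D x -> 0 <= g x) ->
  \int[mu]_(x in D) f x + \int[mu]_(x in D) g x <= \int[mu]_(x in D) (f x + g x).
Proof.
move=> f0 g0.
have fg0 : forall x, D x -> 0 <= f x + g x by move=> x Dx; exact: adde_ge0 (f0 _ Dx) (g0 _ Dx).
rewrite (ge0_integralE _ f0) (ge0_integralE _ g0) (ge0_integralE _ fg0).
have z0 : forall G : T -> \bar R, (forall x, D x -> 0 <= G x) ->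
   [set sintegral mu h | h in [set h : {nnsfun T >-> R} | forall x, (h x)%:E <= (G \_ D) x]]
     (sintegral mu (@nnsfun0 _ T R)).
  move=> G G0; exists nnsfun0 => // x /=; rewrite /patch; case: ifPn => // /set_mem /G0 //.
have ge0 : forall G : T -> \bar R, forall a,
   [set sintegral mu h | h in [set h : {nnsfun T >-> R} | forall x, (h x)%:E <= (G \_ D) x]] a -> 0 <= a.
  by move=> F _ [h _ <-]; exact: sintegral_ge0.
apply: (@sup_add_le R _ _ _ _ _ (z0 _ f0) (z0 _ g0) (ge0 f) (ge0 g)).
move=> _ _ [h1 H1 <-] [h2 H2 <-]; rewrite -sintegralD; apply: ereal_sup_ubound.
exists (add_nnsfun h1 h2) => //= x.
have := H1 x; have := H2 x; rewrite /patch; case: ifPn => _ a b; rewrite EFinD; first exact: leeD.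
by rewrite -[X in _ <= X]adde0; exact: leeD.
Qed.
End helpers.

Theorem theorem11 (R : realType) (n p : nat) (d : measure_display)
  (Y : measurableType d) (X : set 'rV[R]_n)
  (P : probability (borel_rV R n * Y)%type R)
  (dist : 'rV[R]_n -> 'rV[R]_n -> R) (W : set 'rV[R]_p)
  (loss : 'rV[R]_n -> Y -> 'rV[R]_p -> R) (eps : R) :
  P.-negligible (~` (X `*` [set: Y])) ->
  is_metric_on X dist ->
  compact W ->
  (forall x y w, X x -> W w -> 0 <= loss x y w) ->
  (forall x y w, X x -> W w -> differentiable (fun x' => loss x' y w) x) ->
  (forall x x' y w, X x -> X x' -> W w ->
     loss x' y w - loss x y w >= dotv (grad (fun u => loss u y w) x) (x' - x)) ->
  0 <= eps ->
  (ereal_inf [set (\int[P]_(z in X `*` [set: Y])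
                    ereal_sup [set (loss x' z.2 w)%:E
                              | x' in [set x' | X x' /\ (dist z.1 x' <= eps)%R]])%E
             | w in W]
   >= ereal_inf [set (\int[P]_(z in X `*` [set: Y]) (loss z.1 z.2 w)%:E)%E
                | w in W]
      + ereal_inf [set (\int[P]_(z in X `*` [set: Y])
                    ereal_sup [set (dotv (grad (fun u => loss u z.2 w) z.1) (x' - z.1))%:E
                              | x' in [set x' | X x' /\ (dist z.1 x' <= eps)%R]])%E
                  | w in W])%E.
Proof.
move=> _ [_ [dist0 _]] _ l0 _ cvx eps0.
apply: le_ereal_inf_tmp => _ [w Ww <-].
set D := X `*` [set: Y].
pose Hf z := ereal_sup [set (dotv (grad (fun u => loss u z.2 w) z.1) (x' - z.1))%:E
                              | x' in [set x' | X x' /\ (dist z.1 x' <= eps)%R]].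
have H0 : forall z, D z -> (0 <= Hf z)%E.
  move=> [x y] [/= Xx _]; apply: ereal_sup_ubound; exists x.
    by split => //; rewrite (proj2 (dist0 x x Xx Xx)).
  rewrite subrr /dotv big1 // => i _; by rewrite !mxE; apply: mulr0.
have G0 : forall z, D z -> (0 <= (loss z.1 z.2 w)%:E)%E.
  by move=> [x y] [/= Xx _]; rewrite lee_fin l0.
eapply le_trans.
  by apply: leeD; apply: ereal_inf_lbound; exists w.
apply: le_trans (@int_superadd _ _ _ P _ _ _ G0 H0) _.
apply: int_mono; first by move=> z Dz; exact: adde_ge0 (G0 _ Dz) (H0 _ Dz).
move=> [x y] [/= Xx _]; rewrite -leeBrDl //; apply: ge_ereal_sup.
move=> _ [x' [Xx' dx'] <-]; rewrite leeBrDl // -EFinD.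
apply: le_trans (_ : ((loss x' y w)%:E <= _)%E); last first.
  by apply: ereal_sup_ubound; exists x'.
rewrite lee_fin; have := cvx x x' y w Xx Xx' Ww; lra.
Qed.
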